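(* For every integer $K\ge1$, $$s(5,K,3)=\begin{cases}\left\lceil\frac{K}{2}\right\rceil & \text{if } K\equiv 0 \text{ or } 9 \pmod{10},\\[2pt] \left\lceil\frac{K}{2}\right\rceil+1 & \text{otherwise.}\end{cases}$$
   Context: A placement delivery array $S$-PDA$(F,K,Z)$ is an $F\times K$ array $R=(r_{j,k})$, $1\le j\le F$, $1\le k\le K$, over a finite set $S$ such that: (1) each cell is either empty or contains an element of $S$; (2) each column contains exactly $Z$ empty cells; (3) each element of $S$ occurs at most once in each row and at most once in each column; (4) if two distinct nonempty cells satisfy $r_{j_1,k_1}=r_{j_2,k_2}=t\in S$, then the cells $r_{j_1,k_2}$ and $r_{j_2,k_1}$ are empty. For integers $F,K\ge1$, $0\le Z\le F$, define $s(F,K,Z)=\min\{|S| : \text{there exists an } S\text{-PDA}(F,K,Z)\}$. *)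

(* Defs.v *)
From mathcomp Require Import all_boot.
Unset Printing Implicit Defensive.

(* An S-PDA(F,K,Z) with symbol set S = 'I_n (any finite set of size n can be
   relabelled as 'I_n).  Cell (j,k) is [None] if empty, [Some t] if it holds t. *)
Definition is_PDA (F K Z n : nat) (R : 'I_F -> 'I_K -> option 'I_n) : Prop :=
  (forall k : 'I_K, #|[set j : 'I_F | R j k == None]| = Z) /\
  (forall (j : 'I_F) (k1 k2 : 'I_K) (t : 'I_n),
      R j k1 = Some t -> R j k2 = Some t -> k1 = k2) /\
  (forall (j1 j2 : 'I_F) (k : 'I_K) (t : 'I_n),
      R j1 k = Some t -> R j2 k = Some t -> j1 = j2) /\
  (forall (j1 j2 : 'I_F) (k1 k2 : 'I_K) (t : 'I_n),
      (j1, k1) <> (j2, k2) -> R j1 k1 = Some t -> R j2 k2 = Some t ->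
      R j1 k2 = None /\ R j2 k1 = None).

Definition PDA_exists (F K Z n : nat) : Prop :=
  exists R : 'I_F -> 'I_K -> option 'I_n, is_PDA F K Z n R.

Definition s_PDA_eq (F K Z m : nat) : Prop :=
  PDA_exists F K Z m /\ (forall n, n < m -> ~ PDA_exists F K Z n).

(* Main.v *)
Require Import Defs.
From mathcomp Require Import all_boot.
From mathcomp Require Import zify.

Definition vals : seq (option nat) := None :: map Some (iota 0 5).
Fixpoint gen (m : nat) : seq (seq (option nat)) :=
  if m is m'.+1 then [seq x :: l | x <- vals, l <- gen m'] else [:: [::]].
Definition allL := gen 5.

Definition wf (tb : seq (seq nat)) (i x : nat) : nat := nth 0 (nth [::] tb i) x.
Definition Fl (g : nat -> nat -> nat) (l : seq (option nat)) : nat :=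
  sumn [seq (if nth None l i is Some x then g i x else 0) | i <- iota 0 5].
Definition Wl tb := Fl (wf tb).
Definition szl := Fl (fun _ _ => 1).
Definition validl (l : seq (option nat)) : bool :=
  (size l == 5) && all (fun i => if nth None l i is Some x then
     (x < 5) && (x != i) && (nth None l x == None) else true) (iota 0 5).

Definition Ws : seq (seq (seq nat)) :=
[:: [:: [:: 0; 4; 0; 0; 0]; [:: 1; 0; 3; 0; 0]; [:: 0; 2; 0; 2; 0]; [:: 0; 0; 3; 0; 1]; [:: 0; 0; 0; 4; 0]];
 [:: [:: 0; 0; 4; 0; 0]; [:: 0; 0; 4; 0; 0]; [:: 1; 1; 0; 2; 0]; [:: 0; 0; 3; 0; 1]; [:: 0; 0; 0; 4; 0]];
 [:: [:: 0; 0; 0; 4; 0]; [:: 0; 0; 3; 1; 0]; [:: 0; 2; 0; 2; 0]; [:: 1; 4; 3; 0; 1]; [:: 0; 0; 0; 4; 0]];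
 [:: [:: 0; 0; 0; 0; 4]; [:: 0; 0; 3; 0; 1]; [:: 0; 2; 0; 2; 0]; [:: 0; 0; 3; 0; 1]; [:: 1; 4; 0; 4; 0]];
 [:: [:: 0; 4; 1; 4; 0]; [:: 1; 0; 3; 0; 0]; [:: 4; 2; 0; 3; 0]; [:: 1; 0; 2; 0; 1]; [:: 0; 0; 0; 4; 0]];
 [:: [:: 0; 4; 1; 0; 4]; [:: 1; 0; 3; 0; 0]; [:: 4; 2; 0; 2; 1]; [:: 0; 0; 3; 0; 1]; [:: 1; 0; 4; 4; 0]];
 [:: [:: 0; 4; 0; 1; 4]; [:: 1; 0; 3; 0; 0]; [:: 0; 2; 0; 2; 0]; [:: 4; 0; 3; 0; 2]; [:: 1; 0; 0; 3; 0]];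
 [:: [:: 0; 4; 0; 0; 0]; [:: 1; 0; 4; 4; 0]; [:: 0; 1; 0; 3; 0]; [:: 0; 1; 2; 0; 1]; [:: 0; 0; 0; 4; 0]];
 [:: [:: 0; 4; 0; 0; 0]; [:: 1; 0; 4; 0; 4]; [:: 0; 1; 0; 2; 1]; [:: 0; 0; 3; 0; 1]; [:: 0; 1; 4; 4; 0]];
 [:: [:: 0; 4; 0; 0; 0]; [:: 1; 0; 3; 1; 4]; [:: 0; 2; 0; 2; 0]; [:: 0; 4; 3; 0; 2]; [:: 0; 1; 0; 3; 0]];
 [:: [:: 0; 4; 0; 0; 0]; [:: 1; 0; 3; 0; 0]; [:: 0; 2; 0; 3; 4]; [:: 0; 0; 2; 0; 2]; [:: 0; 0; 1; 3; 0]]].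

Lemma C0 : all (fun tb => all (fun u => all (fun v => (u == v) || ((wf tb u v + wf tb v u) %% 5 == 0)) (iota 0 5)) (iota 0 5)) Ws.
Proof. by vm_compute. Qed.
Lemma C1 : all (fun l => validl l ==> (szl l <= 4) && ((szl l == 4) ==> all (fun tb => Wl tb l %% 5 == 1) Ws)) allL.
Proof. by vm_compute. Qed.
Lemma C2 : all (fun l => validl l && (szl l == 2) ==> all (fun k => all (fun tb => (k + Wl tb l) %% 5 == 0) Ws ==> ((k+1) %% 5 == 0)) (iota 0 5)) allL.
Proof. by vm_compute. Qed.
Definition L3 := [seq l <- allL | validl l && (szl l == 3)].
Lemma C3 : all (fun l => all (fun l' => all (fun k => all (fun tb => (k + Wl tb l + Wl tb l') %% 5 == 0) Ws ==> ((k+2) %% 5 == 0)) (iota 0 5)) L3) L3.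
Proof. by vm_compute. Qed.

Lemma mem_gen m l : size l = m -> all (mem vals) l -> l \in gen m.
Proof.
elim: m l => [|m IH] [|x l] // [Hs] /andP [Hx Hl].
by apply: (allpairs_f (fun a b => a :: b)) => //; apply: IH.
Qed.

Lemma valid_allL l : validl l -> l \in allL.
Proof.
case/andP => /eqP Hs Ha; apply: mem_gen => //.
apply/allP => x /(nthP None) [i Hi <-].
have /allP /(_ i) := Ha; rewrite mem_iota /= -Hs Hi => /(_ isT).
case: (nth None l i) => [y|] // /andP [/andP [Hy _] _].
by rewrite /vals in_cons (mem_map (@Some_inj _)) mem_iota add0n leq0n -Hs Hy orbT.
Qed.

Arguments valid_allL {l}.

Lemma szl_le4 l : validl l -> szl l <= 4.
Proof.
move=> Hv; have /allP /(_ l (valid_allL Hv)) := C1; rewrite Hv /=.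
by case/andP.
Qed.

Lemma star_W l tb : validl l -> szl l = 4 -> tb \in Ws -> Wl tb l %% 5 = 1.
Proof.
move=> Hv H4 Ht; have /allP /(_ l (valid_allL Hv)) := C1.
by rewrite Hv H4 eqxx implyTb => /andP [_ /allP /(_ tb Ht) /eqP].
Qed.

Definition stp (c : seq (option nat)) := szl c == 4.
Definition NS s := [seq c <- s | ~~ stp c].

Lemma e1 s : \sum_(c <- s) szl c = 4 * count stp s + \sum_(c <- NS s) szl c.
Proof.
elim: s => [|c s IH]; first by rewrite !big_nil.
move: IH; rewrite /NS /stp /= big_cons => IH; rewrite IH; case: eqP => H /=; rewrite ?big_cons ?H; lia.
Qed.

Lemma e2 s : size s = count stp s + size (NS s).
Proof.
elim: s => [|c s IH] //; move: IH; rewrite /NS /stp /= => IH; case: eqP => H /=; lia.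
Qed.

Lemma e3 tb s : all validl s -> tb \in Ws ->
  exists q, \sum_(c <- s) Wl tb c = count stp s + \sum_(c <- NS s) Wl tb c + 5 * q.
Proof.
move=> + Ht; elim: s => [|c s IH]; first by exists 0; rewrite !big_nil.
case/andP => Hc /IH [q Hq].
move: Hq; rewrite /NS /stp /= big_cons => Hq; rewrite Hq.
case: eqP => Hs /=.
- have Hm := star_W c tb Hc Hs Ht.
  exists (q + Wl tb c %/ 5); rewrite [Wl tb c in LHS](divn_eq _ 5) Hm; lia.
- by exists q; rewrite big_cons; lia.
Qed.

Lemma NS_valid s : all validl s -> all (fun c => validl c && (szl c <= 3)) (NS s).
Proof.
move=> /allP H; apply/allP => c; rewrite mem_filter => /andP [Hn Hc].
rewrite H //=; have := szl_le4 c (H c Hc); move: Hn; rewrite /stp; lia.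
Qed.

Lemma sum_le3 N : all (fun c => validl c && (szl c <= 3)) N -> \sum_(c <- N) szl c <= 3 * size N.
Proof.
elim: N => [|c N IH]; first by rewrite big_nil.
rewrite big_cons /= => /andP [/andP [_ H] /IH]; lia.
Qed.

Lemma comb (s : seq (seq (option nat))) :
  all validl s ->
  (forall tb, tb \in Ws -> 5 %| \sum_(c <- s) Wl tb c) ->
  ~~ odd (\sum_(c <- s) szl c) ->
  \sum_(c <- s) szl c <= 4 * size s /\
  (4 * size s - \sum_(c <- s) szl c <= 2 -> 5 %| size s).
Proof.
move=> Hv HW Hodd.
have HN := NS_valid _ Hv; have HN3 := sum_le3 _ HN.
rewrite e1 e2 in Hodd *.
split; first lia.
move=> HD.
have tb0 : head [::] Ws \in Ws by [].
set m := count stp s in Hodd HD *.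
have Hk : forall tb, tb \in Ws -> 5 %| m + \sum_(c <- NS s) Wl tb c.
  move=> tb Ht; have [q Hq] := e3 tb _ Hv Ht; have := HW tb Ht; rewrite Hq.
  by rewrite dvdn_addl // dvdn_mulr.
move: HN HN3 Hk HD Hodd; case: (NS s) => [|c [|c' [|c'' N]]] /=.
- move=> _ _ /(_ _ tb0); rewrite big_nil addn0 => ?; by [].  
- rewrite !big_cons !big_nil !addn0 => /andP [/andP [Hc Hc3] _] _ Hk HD Hodd.
  have Hc2 : szl c == 2.
    move: Hodd; rewrite oddD oddM /= => Ho.
    apply/eqP; move: HD Hc3 Ho; case: (szl c) => [|[|[|[|x]]]] //=; lia.
  have /allP /(_ c (valid_allL Hc)) := C2; rewrite Hc Hc2 andbT implyTb => /allP /(_ (m %% 5)).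
  rewrite mem_iota ltn_pmod // => /(_ isT) /implyP H.
  have : (m %% 5 + 1) %% 5 == 0.
    apply: H; apply/allP => tb Ht; have := Hk tb Ht.
    by rewrite /dvdn big_cons big_nil addn0 modnDml.
  by rewrite modnDml.
- rewrite !big_cons !big_nil !addn0 => /and3P [/andP [Hc Hc3] /andP [Hc' Hc3'] _] _ Hk HD Hodd.
  have H3 : szl c = 3 /\ szl c' = 3 by lia.
  have L3c : c \in L3 by rewrite mem_filter Hc (proj1 H3) valid_allL.
  have L3c' : c' \in L3 by rewrite mem_filter Hc' (proj2 H3) valid_allL.
  have /allP /(_ c L3c) := C3; move=> /allP /(_ c' L3c') /allP /(_ (m %% 5)).
  rewrite mem_iota ltn_pmod // => /(_ isT) /implyP H.
  have : (m %% 5 + 2) %% 5 == 0.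
    apply: H; apply/allP => tb Ht; have := Hk tb Ht.
    rewrite /dvdn !big_cons big_nil addn0 addnA => H'.
    by rewrite -addnA modnDml addnA.
  by rewrite modnDml.
- move=> _ H3 _ HD _; move: H3 HD; rewrite !big_cons; lia.
Qed.
Set Implicit Arguments.
Unset Strict Implicit.

Definition other {K n} (R : 'I_5 -> 'I_K -> option 'I_n) (j : 'I_5) (k : 'I_K) : 'I_5 :=
  odflt j [pick i | (i != j) && (R i k != None)].
Definition cfg {K n} (R : 'I_5 -> 'I_K -> option 'I_n) (t : 'I_n) (j : 'I_5) : option 'I_5 :=
  if [pick k | R j k == Some t] is Some k then Some (other R j k) else None.
Definition cl {K n} (R : 'I_5 -> 'I_K -> option 'I_n) (t : 'I_n) : seq (option nat) :=
  mkseq (fun i => omap val (cfg R t (inord i))) 5.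

Lemma col2 K n (R : 'I_5 -> 'I_K -> option 'I_n) (HP : is_PDA 5 K 3 n R) k :
  exists a b : 'I_5, a != b /\ [set j | R j k != None] = [set a; b].
Proof.
have H := (proj1 HP) k.
have E : ~: [set j | R j k == None] = [set j | R j k != None] by apply/setP => j; rewrite !inE.
have := cardsC [set j | R j k == None]; rewrite H card_ord E => Hc.
apply/cards2P; apply/eqP; lia.
Qed.

Lemma other_eq K n (R : 'I_5 -> 'I_K -> option 'I_n) k (a b : 'I_5) :
  a != b -> [set j | R j k != None] = [set a; b] -> other R a k = b.
Proof.
move=> Hab E; rewrite /other; case: pickP => [i /andP [Hia Hi] | Hn] /=.
- have : i \in [set j | R j k != None] by rewrite inE.
  rewrite E !inE => /orP [/eqP Hia'| /eqP //]; by rewrite Hia' eqxx in Hia.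
- have : b \in [set a; b] by rewrite !inE eqxx orbT.
  rewrite -E inE => Hb; have := Hn b; by rewrite Hb eq_sym Hab.
Qed.

Lemma other_spec K n (R : 'I_5 -> 'I_K -> option 'I_n) (HP : is_PDA 5 K 3 n R) j k :
  R j k != None -> other R j k != j /\ R (other R j k) k != None.
Proof.
move=> Hj; have [a [b [Hab E]]] := col2 HP k.
have : j \in [set a; b] by rewrite -E inE.
have Ha : a \in [set j | R j k != None] by rewrite E !inE eqxx.
have Hb : b \in [set j | R j k != None] by rewrite E !inE eqxx orbT.
rewrite !inE in Ha Hb.
rewrite !inE => /orP [/eqP-> | /eqP->].
- by rewrite (other_eq Hab E) eq_sym Hab.
- have E' : [set j | R j k != None] = [set b; a] by rewrite E setUC.
  by rewrite eq_sym in Hab; rewrite (other_eq Hab E') eq_sym Hab.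
Qed.

Lemma colsum K n (R : 'I_5 -> 'I_K -> option 'I_n) (HP : is_PDA 5 K 3 n R) k :
  exists a b : 'I_5, a != b /\ forall G : 'I_5 -> 'I_5 -> nat,
  \sum_(j < 5) (if R j k is Some _ then G j (other R j k) else 0) = G a b + G b a.
Proof.
have [a [b [Hab E]]] := col2 HP k; exists a, b; split => // G.
rewrite (bigID (fun j => R j k != None)) /= [X in _ + X]big1; last first.
  by move=> j /negbNE /eqP ->.
rewrite addn0 (eq_bigl (fun j => j \in [set a; b])); last by move=> j; rewrite -E inE.
rewrite (eq_bigr (fun j => G j (other R j k))); last first.
  by move=> j; rewrite -E inE; case: (R j k).
rewrite big_setU1 ?big_set1; last by rewrite inE.
have E' : [set j | R j k != None] = [set b; a] by rewrite E setUC.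
rewrite (other_eq Hab E); rewrite eq_sym in Hab; by rewrite (other_eq Hab E').
Qed.

Lemma rowsum K n (R : 'I_5 -> 'I_K -> option 'I_n) (HP : is_PDA 5 K 3 n R) j (G : 'I_K -> nat) :
  \sum_(t < n) (if [pick k | R j k == Some t] is Some k then G k else 0) =
  \sum_(k < K) (if R j k is Some _ then G k else 0).
Proof.
symmetry.
transitivity (\sum_(k < K) \sum_(t < n) (if R j k == Some t then G k else 0)).
  apply: eq_bigr => k _; case E: (R j k) => [t0|].
  - rewrite (bigD1 t0) //= eqxx big1 ?addn0 // => t Ht.
    case: eqP => // [[Et]]; by rewrite Et eqxx in Ht.
  - by rewrite big1.
rewrite exchange_big; apply: eq_bigr => t _.
case: pickP => [k0 /eqP Hk0 | Hn].
- rewrite (bigD1 k0) //= Hk0 eqxx big1 ?addn0 // => k Hk.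
  case: eqP => // Hjk.
  have := (proj1 (proj2 HP)) j k k0 t Hjk Hk0; move=> Ek; by rewrite Ek eqxx in Hk.
- by apply: big1 => k _; rewrite Hn.
Qed.

Lemma swap_sum K n (R : 'I_5 -> 'I_K -> option 'I_n) (HP : is_PDA 5 K 3 n R) (G : 'I_5 -> 'I_5 -> nat) :
  \sum_(t < n) \sum_(j < 5) (if cfg R t j is Some x then G j x else 0) =
  \sum_(k < K) \sum_(j < 5) (if R j k is Some _ then G j (other R j k) else 0).
Proof.
rewrite exchange_big [RHS]exchange_big; apply: eq_bigr => j _.
rewrite -(rowsum HP j (fun k => G j (other R j k))).
apply: eq_bigr => t _; rewrite /cfg; by case: pickP.
Qed.

Lemma Fl_big g l : Fl g l = \sum_(i < 5) (if nth None l i is Some x then g i x else 0).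
Proof. rewrite /Fl sumnE big_map; have -> : iota 0 5 = index_iota 0 5 by []. by rewrite big_mkord. Qed.

Lemma Fl_cl K n (R : 'I_5 -> 'I_K -> option 'I_n) g t :
  Fl g (cl R t) = \sum_(j < 5) (if cfg R t j is Some x then g j x else 0).
Proof.
rewrite Fl_big; apply: eq_bigr => j _; rewrite /cl nth_mkseq // inord_val.
by case: (cfg R t j).
Qed.

Lemma cl_valid K n (R : 'I_5 -> 'I_K -> option 'I_n) (HP : is_PDA 5 K 3 n R) t :
  validl (cl R t).
Proof.
rewrite /validl size_mkseq eqxx andTb; apply/allP => i; rewrite mem_iota => /andP [_ Hi].
rewrite /cl nth_mkseq //.
case E: (cfg R t (inord i)) => [x|] //=.
move: E; rewrite /cfg; case: pickP => // k /eqP Hk [Ex].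
have Hj : R (inord i) k != None by rewrite Hk.
have [Hx1 Hx2] := other_spec HP Hj.
rewrite Ex in Hx1 Hx2.
rewrite ltn_ord /= nth_mkseq // inord_val.
apply/andP; split.
  apply: contra Hx1 => /eqP Hxi; apply/eqP/val_inj; rewrite /= inordK //.
rewrite -/(cfg R t x); case E2: (cfg R t x) => [y|] //.
move: E2; rewrite /cfg; case: pickP => // k' /eqP Hk' _.
have Hne : (inord i : 'I_5, k) <> (x, k').
  by move=> [Hjx _]; move: Hx1; rewrite Hjx eqxx.
have [_ Hxk] := (proj2 (proj2 (proj2 HP))) _ _ _ _ _ Hne Hk Hk'.
by rewrite Hxk in Hx2.
Qed.

Lemma lower K n (R : 'I_5 -> 'I_K -> option 'I_n) :
  is_PDA 5 K 3 n R -> 2 * K <= 4 * n /\ (4 * n - 2 * K <= 2 -> 5 %| n).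
Proof.
move=> HP.
set s := [seq cl R t | t <- enum 'I_n].
have Hv : all validl s by apply/allP => c /mapP [t _ ->]; exact: cl_valid.
have Hsize : size s = n by rewrite size_map size_enum_ord.
have Hsz : \sum_(c <- s) szl c = 2 * K.
  rewrite big_map big_enum /=.
  rewrite (eq_bigr (fun t => \sum_(j < 5) (if cfg R t j is Some x then (fun _ _ => 1) j x else 0)));
    last by move=> t _; rewrite /szl Fl_cl.
  rewrite swap_sum //.
  rewrite (eq_bigr (fun _ => 2)); first by rewrite big_const_ord iter_addn_0 mulnC.
  move=> k _; have [a [b [_ H]]] := colsum HP k; exact: (H (fun _ _ => 1)).
have HW : forall tb, tb \in Ws -> 5 %| \sum_(c <- s) Wl tb c.
  move=> tb Ht; rewrite big_map big_enum /=.
  rewrite (eq_bigr (fun t => \sum_(j < 5) (if cfg R t j is Some x then (fun (j x : 'I_5) => wf tb j x) j x else 0)));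
    last by move=> t _; rewrite /Wl Fl_cl.
  rewrite swap_sum //; apply: dvdn_sum => k _.
  have [a [b [Hab H]]] := colsum HP k; rewrite (H (fun (j x : 'I_5) => wf tb j x)).
  have /allP /(_ tb Ht) /allP /(_ a) := C0.
  rewrite mem_iota ltn_ord => /(_ isT) /allP /(_ b); rewrite mem_iota ltn_ord => /(_ isT).
  move=> /orP [/eqP /val_inj Eab | //]; by rewrite Eab eqxx in Hab.
have Hodd : ~~ odd (\sum_(c <- s) szl c) by rewrite Hsz oddM.
have := comb _ Hv HW Hodd; rewrite Hsize Hsz; done.
Qed.

Definition glueR K1 K2 n1 n2 (R1 : 'I_5 -> 'I_K1 -> option 'I_n1)
  (R2 : 'I_5 -> 'I_K2 -> option 'I_n2) : 'I_5 -> 'I_(K1 + K2) -> option 'I_(n1 + n2) :=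
  fun j k => match split k with
             | inl a => omap (lshift n2) (R1 j a)
             | inr b => omap (@rshift n1 n2) (R2 j b) end.

Lemma omapS (A B : Type) (f : A -> B) x y : omap f x = Some y -> exists x', x = Some x' /\ y = f x'.
Proof. by case: x => //= x' [<-]; exists x'. Qed.

Lemma omapN (A B : eqType) (f : A -> B) x : (omap f x == None) = (x == None).
Proof. by case: x. Qed.

Lemma lr_neq n1 n2 (t1 : 'I_n1) (t2 : 'I_n2) : lshift n2 t1 <> rshift n1 t2.
Proof. move/(congr1 val) => /=; have := ltn_ord t1; lia. Qed.

Lemma glue K1 K2 n1 n2 (R1 : 'I_5 -> 'I_K1 -> option 'I_n1) (R2 : 'I_5 -> 'I_K2 -> option 'I_n2) :
  is_PDA 5 K1 3 n1 R1 -> is_PDA 5 K2 3 n2 R2 -> is_PDA 5 (K1 + K2) 3 (n1 + n2) (glueR R1 R2).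
Proof.
move=> [A1 [B1 [C1 D1]]] [A2 [B2 [C2 D2]]]; rewrite /glueR; split; [|split; [|split]].
- move=> k; case: splitP => [a _ | b _].
  + rewrite -[RHS](A1 a); apply: eq_card => j; by rewrite !inE omapN.
  + rewrite -[RHS](A2 b); apply: eq_card => j; by rewrite !inE omapN.
- move=> j k1 k2 t; case: splitP => [a1 E1 | b1 E1]; case: splitP => [a2 E2 | b2 E2];
    move=> X Y; have [x1 [H1 Ht]] := omapS X; have [x2 [H2 Ex]] := omapS Y; subst t; clear X Y.
  + have {}Ex := lshift_inj Ex; subst x2; have := B1 _ _ _ _ H1 H2 => Ea.
    by apply: ord_inj; rewrite E1 E2 Ea.
  + by have := lr_neq Ex.
  + by have := lr_neq (esym Ex).
  + have {}Ex := rshift_inj Ex; subst x2; have := B2 _ _ _ _ H1 H2 => Ea.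
    by apply: ord_inj; rewrite E1 E2 Ea.
- move=> j1 j2 k t; case: splitP => [a E | b E];
    move=> X Y; have [x1 [H1 Ht]] := omapS X; have [x2 [H2 Ex]] := omapS Y; subst t; clear X Y.
  + have {}Ex := lshift_inj Ex; subst x2; exact: C1 H1 H2.
  + have {}Ex := rshift_inj Ex; subst x2; exact: C2 H1 H2.
- move=> j1 j2 k1 k2 t Hne; case: splitP => [a1 E1 | b1 E1]; case: splitP => [a2 E2 | b2 E2];
    move=> X Y; have [x1 [H1 Ht]] := omapS X; have [x2 [H2 Ex]] := omapS Y; subst t; clear X Y.
  + have {}Ex := lshift_inj Ex; subst x2.
    have Hne' : (j1, a1) <> (j2, a2).
      move=> [Ej Ea]; apply: Hne; congr (_, _) => //; apply: ord_inj; by rewrite E1 E2 Ea.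
    by have [-> ->] := D1 _ _ _ _ _ Hne' H1 H2.
  + by have := lr_neq Ex.
  + by have := lr_neq (esym Ex).
  + have {}Ex := rshift_inj Ex; subst x2.
    have Hne' : (j1, b1) <> (j2, b2).
      move=> [Ej Ea]; apply: Hne; congr (_, _) => //; apply: ord_inj; by rewrite E1 E2 Ea.
    by have [-> ->] := D2 _ _ _ _ _ Hne' H1 H2.
Qed.
Unset Implicit Arguments.
Set Strict Implicit.

Definition tbl (K : nat) : seq (seq nat) :=
  match K with
  | 1 => [:: [:: 1]; [:: 2]; [:: 0]; [:: 0]; [:: 0]]
  | 2 => [:: [:: 1; 0]; [:: 2; 0]; [:: 0; 1]; [:: 0; 2]; [:: 0; 0]]
  | 3 => [:: [:: 1; 3; 0]; [:: 2; 0; 3]; [:: 0; 2; 1]; [:: 0; 0; 0]; [:: 0; 0; 0]]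
  | 4 => [:: [:: 1; 3; 0; 0]; [:: 2; 0; 3; 0]; [:: 0; 2; 1; 0]; [:: 0; 0; 0; 1]; [:: 0; 0; 0; 2]]
  | 5 => [:: [:: 1; 3; 0; 0; 0]; [:: 2; 4; 0; 0; 0]; [:: 0; 0; 1; 3; 0]; [:: 0; 0; 2; 0; 3]; [:: 0; 0; 0; 2; 1]]
  | 6 => [:: [:: 1; 3; 4; 0; 0; 0]; [:: 2; 0; 0; 3; 4; 0]; [:: 0; 2; 0; 1; 0; 4]; [:: 0; 0; 2; 0; 1; 3]; [:: 0; 0; 0; 0; 0; 0]]
  | 7 => [:: [:: 1; 3; 5; 0; 0; 0; 0]; [:: 2; 4; 0; 5; 0; 0; 0]; [:: 0; 0; 2; 1; 3; 4; 0]; [:: 0; 0; 0; 0; 5; 0; 1]; [:: 0; 0; 0; 0; 0; 5; 2]]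
  | 8 => [:: [:: 1; 3; 5; 0; 0; 0; 0; 0]; [:: 2; 4; 0; 5; 0; 0; 0; 0]; [:: 0; 0; 2; 1; 3; 4; 0; 0]; [:: 0; 0; 0; 0; 5; 0; 1; 4]; [:: 0; 0; 0; 0; 0; 5; 2; 3]]
  | 9 => [:: [:: 1; 3; 4; 5; 0; 0; 0; 0; 0]; [:: 2; 0; 0; 0; 3; 4; 5; 0; 0]; [:: 0; 2; 0; 0; 1; 0; 0; 4; 5]; [:: 0; 0; 2; 0; 0; 1; 0; 3; 0]; [:: 0; 0; 0; 2; 0; 0; 1; 0; 3]]
  | 10 => [:: [:: 1; 3; 4; 5; 0; 0; 0; 0; 0; 0]; [:: 2; 0; 0; 0; 3; 4; 5; 0; 0; 0]; [:: 0; 2; 0; 0; 1; 0; 0; 4; 5; 0]; [:: 0; 0; 2; 0; 0; 1; 0; 3; 0; 5]; [:: 0; 0; 0; 2; 0; 0; 1; 0; 3; 4]]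
  | _ => [::]
  end.

Definition Aof (tb : seq (seq nat)) (j k : nat) : nat := nth 0 (nth [::] tb j) k.
Definition mkR (tb : seq (seq nat)) K n : 'I_5 -> 'I_K -> option 'I_n :=
  fun j k => if Aof tb j k is c.+1 then insub c else None.

Definition chk K n (A : nat -> nat -> nat) : bool :=
  [&& all (fun k => count (fun j => A j k == 0) (iota 0 5) == 3) (iota 0 K),
     all (fun j => all (fun k => A j k <= n) (iota 0 K)) (iota 0 5),
     all (fun j => all (fun k1 => all (fun k2 => (A j k1 != 0) && (A j k1 == A j k2) ==> (k1 == k2)) (iota 0 K)) (iota 0 K)) (iota 0 5),
     all (fun j1 => all (fun j2 => all (fun k => (A j1 k != 0) && (A j1 k == A j2 k) ==> (j1 == j2)) (iota 0 K)) (iota 0 5)) (iota 0 5) &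
     all (fun j1 => all (fun j2 => all (fun k1 => all (fun k2 => ((j1 != j2) || (k1 != k2)) && (A j1 k1 != 0) && (A j1 k1 == A j2 k2) ==> (A j1 k2 == 0) && (A j2 k1 == 0)) (iota 0 K)) (iota 0 K)) (iota 0 5)) (iota 0 5)].

Lemma allI (p : pred nat) m : all p (iota 0 m) -> forall i, i < m -> p i.
Proof. by move/allP => H i Hi; apply: H; rewrite mem_iota. Qed.
Arguments allI {p m} _ {i} _.

Lemma card_iota m (p : pred nat) : #|[set j : 'I_m | p j]| = count p (iota 0 m).
Proof.
rewrite cardsE cardE /enum_mem size_filter -val_enum_ord count_map.
rewrite enumT; apply: eq_count => x; by rewrite !inE.
Qed.

Lemma bridge tb K n : chk K n (Aof tb) -> is_PDA 5 K 3 n (mkR tb K n).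
Proof.
move/and5P => [Ha Hb Hc Hd He].
have Hle : forall (j : 'I_5) (k : 'I_K), Aof tb j k <= n.
  by move=> j k; exact: (allI (allI Hb (ltn_ord j)) (ltn_ord k)).
have RS : forall j k t, mkR tb K n j k = Some t <-> Aof tb j k = t.+1.
  move=> j k t; rewrite /mkR; case E: (Aof tb j k) => [|c]; first by split.
  case: insubP => [u _ Eu | Hn]; last by have := Hle j k; rewrite E (negbTE Hn).
  split => [[<-]|[Ec]]; first by rewrite Eu.
  by congr Some; apply: ord_inj; rewrite Eu Ec.
have RN : forall j k, (mkR tb K n j k == None) = (Aof tb j k == 0).
  move=> j k; rewrite /mkR; case E: (Aof tb j k) => [|c] //.
  case: insubP => // Hn; by have := Hle j k; rewrite E (negbTE Hn).
split; [|split; [|split]].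
- move=> k; rewrite (eq_card (B := [set j : 'I_5 | Aof tb j k == 0])); last first.
    by move=> j; rewrite !inE RN.
  rewrite (card_iota 5 (fun j => Aof tb j k == 0)).
  by apply/eqP; exact: (allI Ha (ltn_ord k)).
- move=> j k1 k2 t /RS E1 /RS E2; apply: ord_inj; apply/eqP.
  have := allI (allI (allI Hc (ltn_ord j)) (ltn_ord k1)) (ltn_ord k2).
  by rewrite E1 E2 eqxx.
- move=> j1 j2 k t /RS E1 /RS E2; apply: ord_inj; apply/eqP.
  have := allI (allI (allI Hd (ltn_ord j1)) (ltn_ord j2)) (ltn_ord k).
  by rewrite E1 E2 eqxx.
- move=> j1 j2 k1 k2 t Hne /RS E1 /RS E2.
  have := allI (allI (allI (allI He (ltn_ord j1)) (ltn_ord j2)) (ltn_ord k1)) (ltn_ord k2).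
  have -> : (val j1 != val j2) || (val k1 != val k2).
    case: eqP => [/ord_inj Ej|] //=; apply/negP => /eqP /ord_inj Ek; apply: Hne; by rewrite Ej Ek.
  rewrite E1 E2 eqxx /= => /andP [/eqP H1 /eqP H2].
  by split; apply/eqP; rewrite RN; apply/eqP.
Qed.

Definition fK K := if (K %% 10 == 0) || (K %% 10 == 9) then (K.+1)./2 else (K.+1)./2 + 1.

Lemma base_chk K : 1 <= K <= 10 -> chk K (fK K) (Aof (tbl K)).
Proof.
case/andP; case: K => [|[|[|[|[|[|[|[|[|[|[|K]]]]]]]]]]] // _ _; by vm_compute.
Qed.

Lemma base K : 1 <= K <= 10 -> PDA_exists 5 K 3 (fK K).
Proof. by move=> H; exists (mkR (tbl K) K (fK K)); apply: bridge; apply: base_chk. Qed.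

Lemma fK10 m : fK (m + 10) = fK m + 5.
Proof.
rewrite /fK modnDr -!divn2.
case: ifP => _; lia.
Qed.

Lemma ex_all K : 1 <= K -> PDA_exists 5 K 3 (fK K).
Proof.
elim: K {-2}K (leqnn K) => [|N IH] K HK H1; first by lia.
case: (leqP K 10) => HK10; first by apply: base; rewrite H1 HK10.
have [m Em] : exists m, K = m + 10 by exists (K - 10); lia.
subst K; rewrite fK10.
have [R1 H1'] := IH m ltac:(lia) ltac:(lia).
have [R2 H2'] := base 10 isT.
exists (glueR R1 R2); exact: glue.
Qed.

Theorem mainTheorem15 (K : nat) (hK : 1 <= K) :
  s_PDA_eq 5 K 3
    (if (K %% 10 == 0) || (K %% 10 == 9) then (K.+1)./2 else (K.+1)./2 + 1).
Proof.
split; first exact: (ex_all K hK).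
move=> n Hn [R HR].
have [H1 H2] := lower HR.
move: Hn; rewrite -divn2; case: ifP => Hc Hn; first lia.
move/norP: Hc => [/eqP h1 /eqP h2].
have : 5 %| n by apply: H2; lia.
move/dvdnP => [q Hq]; subst n; lia.
Qed.
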